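(* For every parallel offering instance $I$, the policy $\mathsf{ALG}_{\mathtt{par}}$ defined below satisfies $R_{\mathsf{ALG}_{\mathtt{par}}}(I)\ge(1-1/e)\,\mathrm{LP}_{\mathtt{par}}(I)\ge(1-1/e)\,\mathsf{OPT}_{\mathtt{par}}(I)$. Policy $\mathsf{ALG}_{\mathtt{par}}$: take an optimal solution $y$ of $\mathrm{LP}_{\mathtt{par}}(I)$ and, independently of the candidates' acceptance decisions, generate a random matrix $Y\in\{0,1\}^{n\times k}$ by the Gandhi–Khuller–Parthasarathy–Srinivasan dependent rounding of $y$ on the complete bipartite graph between candidates $[n]$ and positions $[k]$ (edge weights $y_{ij}$). Form for each position $j$ the list $L_j=\{i:Y_{ij}=1\}$ (so $|L_j|\le T$ and each candidate belongs to at most one list). Run the lists in parallel: in each round, for each position $j$ not yet filled, send an offer for $j$ to the not-yet-offered candidate of $L_j$ with largest $v_{ij}$ (if any remains).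
   Context: Parallel offering problem: integers $1\le k\le T\le n$; $n$ candidates, $k$ positions; $p_{ij}\in[0,1]$ acceptance probability and $v_{ij}\ge0$ value of candidate $i$ for position $j$; acceptance indicators $A_{ij}$ with $\mathbb{P}(A_{ij}=1)=p_{ij}$, possibly correlated across positions for the same candidate but independent across candidates, fixed before the process. In each of $T$ rounds the firm may send at most one offer per unfilled position; each candidate receives at most one offer in total; if $i$ receives an offer for $j$ and $A_{ij}=1$ then $j$ is filled and the firm earns $v_{ij}$. $R_\pi(I)$ is expected total value; $\mathsf{OPT}_{\mathtt{par}}(I)$ the supremum over all (adaptive) policies. $\mathrm{LP}_{\mathtt{par}}(I)$: maximize $\sum_{j,i}v_{ij}p_{ij}y_{ij}$ s.t. $\sum_i y_{ij}\le T\ \forall j$; $\sum_ip_{ij}y_{ij}\le1\ \forall j$; $\sum_jy_{ij}\le1\ \forall i$; $0\le y_{ij}\le1$. The GKPS dependent rounding of weights $y_e\in[0,1]$ on the edges of a bipartite graph outputs random $Y_e\in\{0,1\}$ with: (P1) $\mathbb{E}Y_e=y_e$; (P2) for every vertex $u$, $\sum_{e\ni u}Y_e\in\{\lfloor\ell_u\rfloor,\lceil\ell_u\rceil\}$ almost surely, where $\ell_u=\sum_{e\ni u}y_e$; (P3) for every vertex $u$, every set $S$ of edges incident to $u$ and $b\in\{0,1\}$, $\mathbb{P}(\bigcap_{e\in S}\{Y_e=b\})\le\prod_{e\in S}\mathbb{P}(Y_e=b)$. *)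

(* Defs.v *)
From HB Require Import structures.
From mathcomp Require Import all_boot all_order all_algebra.
From mathcomp Require Import classical_sets reals.
From mathcomp Require Import sequences exp.
Set Implicit Arguments. Unset Strict Implicit. Unset Printing Implicit Defensive.
Import Order.TTheory GRing.Theory Num.Theory.
Local Open Scope ring_scope.

Section ParallelOffering.
Variables (R : realType) (n k : nat).

(* a 0/1 matrix indexed by candidates x positions; used both for the
   acceptance indicators A_{ij} and for the rounded matrix Y_{ij} *)
Definition mat := {ffun 'I_n -> {ffun 'I_k -> bool}}.

(* D i a = probability that candidate i's acceptance vector (A_{ij})_j is a;
   candidates are independent, so the law of A is the product measure. *)
Definition accP (D : 'I_n -> {ffun 'I_k -> bool} -> R) (A : mat) : R :=
  \prod_(i < n) D i (A i).

Definition pacc (D : 'I_n -> {ffun 'I_k -> bool} -> R) (i : 'I_n) (j : 'I_k) : R :=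
  \sum_(a : {ffun 'I_k -> bool} | a j) D i a.

(* One round as observed by the firm: for each position j, either no offer,
   or an offer to candidate i together with its outcome (accepted or not). *)
Definition round_rec := {ffun 'I_k -> option ('I_n * bool)}.
Definition history := seq round_rec.
Definition offers := {ffun 'I_k -> option 'I_n}.
Definition policy := history -> offers.

Definition filled (h : history) (j : 'I_k) : bool :=
  has (fun r : round_rec => if r j is Some (_, true) then true else false) h.

Definition offered (h : history) (i : 'I_n) : bool :=
  has (fun r : round_rec =>
         [exists j, if r j is Some (i', _) then i' == i else false]) h.

Definition valid_offers (h : history) (o : offers) : Prop :=
  (forall j i, o j = Some i -> ~~ filled h j /\ ~~ offered h i) /\
  (forall j j' i, o j = Some i -> o j' = Some i -> j = j').

Definition outcome (A : mat) (o : offers) : round_rec :=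
  [ffun j => if o j is Some i then Some (i, A i j) else None].

Fixpoint run (pol : policy) (A : mat) (t : nat) (h : history) : history :=
  if t is t'.+1 then run pol A t' (rcons h (outcome A (pol h))) else h.

Fixpoint run_valid (pol : policy) (A : mat) (t : nat) (h : history) : Prop :=
  if t is t'.+1 then
    valid_offers h (pol h) /\ run_valid pol A t' (rcons h (outcome A (pol h)))
  else True.

Definition valid_policy (T : nat) (pol : policy) : Prop :=
  forall A : mat, run_valid pol A T [::].

Definition hist_value (v : 'I_n -> 'I_k -> R) (h : history) : R :=
  \sum_(r <- h) \sum_(j < k) (if r j is Some (i, true) then v i j else 0).

Definition Rpol (D : 'I_n -> {ffun 'I_k -> bool} -> R) (v : 'I_n -> 'I_k -> R)
  (T : nat) (pol : policy) : R :=
  \sum_(A : mat) accP D A * hist_value v (run pol A T [::]).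

(* randomized policies: finite mixtures of feasible deterministic policies
   (the randomization being independent of the acceptance indicators) *)
Definition valid_rpolicy (T m : nat) (w : 'I_m -> R) (pols : 'I_m -> policy) : Prop :=
  (forall l, 0 <= w l /\ valid_policy T (pols l)) /\ \sum_(l < m) w l = 1.

Definition Rrpol D v T (m : nat) (w : 'I_m -> R) (pols : 'I_m -> policy) : R :=
  \sum_(l < m) w l * Rpol D v T (pols l).

Definition OPTpar D v T : R :=
  sup [set x : R | exists m w pols,
         valid_rpolicy T w pols /\ x = @Rrpol D v T m w pols].

Definition LP_obj D (v : 'I_n -> 'I_k -> R) (y : 'I_n -> 'I_k -> R) : R :=
  \sum_(j < k) \sum_(i < n) v i j * pacc D i j * y i j.

Definition LP_feasible D (T : nat) (y : 'I_n -> 'I_k -> R) : Prop :=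
  (forall j, \sum_(i < n) y i j <= T%:R) /\
  (forall j, \sum_(i < n) pacc D i j * y i j <= 1) /\
  (forall i, \sum_(j < k) y i j <= 1) /\
  (forall i j, 0 <= y i j <= 1).

Definition LPpar D v T : R :=
  sup [set x : R | exists y, LP_feasible D T y /\ x = LP_obj D v y].

Definition LP_optimal D v T (y : 'I_n -> 'I_k -> R) : Prop :=
  LP_feasible D T y /\ (forall y', LP_feasible D T y' -> LP_obj D v y' <= LP_obj D v y).

Definition prob (PY : mat -> R) (E : pred mat) : R := \sum_(Y : mat | E Y) PY Y.

(* PY is the law of the output of a dependent rounding of y on the complete
   bipartite graph [n] x [k] satisfying the GKPS properties (P1)-(P3). *)
Definition GKPS_rounding (y : 'I_n -> 'I_k -> R) (PY : mat -> R) : Prop :=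
  (forall Y, 0 <= PY Y) /\ \sum_(Y : mat) PY Y = 1 /\
  (forall i j, prob PY (fun Y => Y i j) = y i j) /\
  (forall i Y, 0 < PY Y ->
     let l := \sum_(j < k) y i j in
     let s : R := (\sum_(j < k) (Y i j : nat))%:R in
     s = (Num.floor l)%:~R \/ s = (Num.ceil l)%:~R) /\
  (forall j Y, 0 < PY Y ->
     let l := \sum_(i < n) y i j in
     let s : R := (\sum_(i < n) (Y i j : nat))%:R in
     s = (Num.floor l)%:~R \/ s = (Num.ceil l)%:~R) /\
  (forall i (S : {set 'I_k}) (b : bool),
     prob PY (fun Y => [forall j in S, Y i j == b])
       <= \prod_(j in S) prob PY (fun Y => Y i j == b)) /\
  (forall j (S : {set 'I_n}) (b : bool),
     prob PY (fun Y => [forall i in S, Y i j == b])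
       <= \prod_(i in S) prob PY (fun Y => Y i j == b)).

Definition alg_policy (v : 'I_n -> 'I_k -> R) (Y : mat) : policy :=
  fun h => [ffun j =>
    if filled h j then None else
    [pick i | [&& Y i j, ~~ offered h i &
       [forall i', (Y i' j && ~~ offered h i') ==>
          ((v i' j < v i j) || ((v i' j == v i j) && (i <= i')%N))]]]].

Definition R_ALG D v T (PY : mat -> R) : R :=
  \sum_(Y : mat) PY Y * Rpol D v T (alg_policy v Y).

End ParallelOffering.

(* Main.v *)
Require Import Defs.
From HB Require Import structures.
From mathcomp Require Import all_boot all_order all_algebra.
From mathcomp Require Import classical_sets reals interval_inference.
From mathcomp Require Import sequences exp convex.
From mathcomp Require Import ring lra zify.
Import Order.TTheory GRing.Theory Num.Theory.
Local Open Scope ring_scope.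
Section RunLemmas.
Context {n k : nat}.
Implicit Types (pol : policy n k) (A : mat n k) (h : history n k).

Lemma runS pol A t h :
  run pol A t.+1 h = rcons (run pol A t h) (outcome A (pol (run pol A t h))).
Proof. by elim: t h => [|t IH] h //=; rewrite -IH. Qed.

Lemma run_size pol A t h : size (run pol A t h) = (size h + t)%N.
Proof. by elim: t h => [|t IH] h /=; rewrite ?addn0 // IH size_rcons addSnnS. Qed.

Lemma run_validS pol A t h :
  run_valid pol A t.+1 h <->
  run_valid pol A t h /\ valid_offers (run pol A t h) (pol (run pol A t h)).
Proof.
elim: t h => [|t IH] h /=; first by split=> [[? _]|[_ ?]].
split=> [[v1 /IH [v2 v3]]|[[v1 v2] v3]]; first by [].
by split=> //; apply/IH.
Qed.

Lemma run_valid_at pol A T h : run_valid pol A T h ->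
  forall t, (t < T)%N -> valid_offers (run pol A t h) (pol (run pol A t h)).
Proof.
elim: T => [|T IH] //= hv t; rewrite ltnS leq_eqVlt => /orP[/eqP->|ltT].
  by have /run_validS [] := hv.
by apply: IH => //; have /run_validS [] := hv.
Qed.

Lemma run_ind pol A (P : history n k -> Prop) t h :
  P h -> (forall h', P h' -> P (rcons h' (outcome A (pol h')))) ->
  P (run pol A t h).
Proof. by elim: t h => [|t IH] h //= Ph st; apply: IH => //; apply: st. Qed.

Lemma filled_rcons h r j :
  filled (rcons h r) j = filled h j || (if r j is Some (_, true) then true else false).
Proof. by rewrite /filled has_rcons orbC. Qed.

Lemma offered_rcons h r i :
  offered (rcons h r) i = offered h i ||
    [exists j, if r j is Some (i', _) then i' == i else false].
Proof. by rewrite /offered has_rcons orbC. Qed.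

Lemma outcomeE A (o : offers n k) j :
  outcome A o j = if o j is Some i then Some (i, A i j) else None.
Proof. by rewrite /outcome ffunE. Qed.

Lemma offered_outcome h A (o : offers n k) i :
  offered (rcons h (outcome A o)) i = offered h i || [exists j, o j == Some i].
Proof.
rewrite offered_rcons; congr (_ || _); apply/existsP/existsP => -[j hj]; exists j;
  move: hj; rewrite outcomeE; case: (o j) => //= i'.
all: try by move/eqP->.
all: try by move/eqP=> [->].
Qed.

End RunLemmas.
Arguments run_valid_at {n k pol A T h} _ {t}.
Section Indep.
Variables (R : realType) (n k : nat).
Variable D : 'I_n -> {ffun 'I_k -> bool} -> R.
Hypothesis hD0 : forall i a, 0 <= D i a.
Hypothesis hD1 : forall i, \sum_(a : {ffun 'I_k -> bool}) D i a = 1.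

Definition upd (A : mat n k) (i : 'I_n) (b : {ffun 'I_k -> bool}) : mat n k :=
  [ffun i' => if i' == i then b else A i'].

Lemma upd_same A i b : upd A i b i = b.
Proof. by rewrite /upd ffunE eqxx. Qed.

Lemma upd_other A i b i' : i' != i -> upd A i b i' = A i'.
Proof. by move=> ne; rewrite /upd ffunE (negbTE ne). Qed.

Lemma updK A i b : upd (upd A i b) i (A i) = A.
Proof.
apply/ffunP => i'; rewrite /upd !ffunE.
by case: eqP => [->|_] //.
Qed.

Lemma accP_ge0 A : 0 <= accP D A.
Proof. by apply: prodr_ge0 => i _. Qed.

Lemma accP_sum1 : \sum_(A : mat n k) accP D A = 1.
Proof.
rewrite /accP -bigA_distr_bigA /=.
by rewrite big1 // => i _; rewrite hD1.
Qed.

Lemma accP_upd A i b : accP D (upd A i b) * D i (A i) = accP D A * D i b.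
Proof.
rewrite /accP (bigD1 i) //= [X in _ = X * _](bigD1 i) //= upd_same.
rewrite (eq_bigr (fun i' => D i' (A i'))); last by move=> i' ne; rewrite upd_other.
ring.
Qed.

Lemma resample (F : mat n k -> R) i :
  \sum_A accP D A * F A = \sum_A accP D A * \sum_b D i b * F (upd A i b).
Proof.
transitivity (\sum_A \sum_b accP D A * D i b * F A).
  apply: eq_bigr => A _.
  rewrite -[LHS]mulr1 -(hD1 i) big_distrr /=; apply: eq_bigr => b _.
  by rewrite mulrAC.
rewrite [RHS](eq_bigr (fun A => \sum_b accP D A * D i b * F (upd A i b))); last first.
  by move=> A _; rewrite big_distrr /=; apply: eq_bigr => b _; rewrite mulrA.
rewrite !(pair_bigA _ (fun A b => accP D A * D i b * _)) /=.
pose psi (p : mat n k * {ffun 'I_k -> bool}) := (upd p.1 i p.2, p.1 i).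
have psiK : involutive psi by move=> [A b]; rewrite /psi /= updK upd_same.
rewrite (reindex_inj (inv_inj psiK)) /=; apply: eq_bigr => -[A b] _ /=.
by rewrite accP_upd.
Qed.

Lemma pacc_sum i j : \sum_b D i b * (b j)%:R = pacc D i j.
Proof.
rewrite /pacc [RHS]big_mkcond; apply: eq_bigr => b _.
by case: (b j); rewrite ?mulr1 ?mulr0.
Qed.

Lemma indep (F : mat n k -> R) i j : (forall A b, F (upd A i b) = F A) ->
  \sum_A accP D A * (F A * (A i j)%:R) = pacc D i j * \sum_A accP D A * F A.
Proof.
move=> Finv; rewrite (resample _ i) big_distrr /=; apply: eq_bigr => A _.
rewrite mulrCA; congr (_ * _).
rewrite -pacc_sum big_distrl /=; apply: eq_bigr => b _.
by rewrite Finv upd_same mulrCA mulrC.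
Qed.

Lemma exp_le (G : mat n k -> R) c : (forall A, G A <= c) ->
  \sum_A accP D A * G A <= c.
Proof.
move=> hG; apply: (@le_trans _ _ (\sum_A accP D A * c)).
  by apply: ler_sum => A _; apply: ler_wpM2l => //; apply: accP_ge0.
by rewrite -big_distrl /= accP_sum1 mul1r.
Qed.

Lemma exp_ge0 (G : mat n k -> R) : (forall A, 0 <= G A) ->
  0 <= \sum_A accP D A * G A.
Proof. by move=> hG; apply: sumr_ge0 => A _; apply: mulr_ge0 => //; apply: accP_ge0. Qed.

End Indep.
Arguments upd {n k}.
Arguments indep {R n k D} hD1 F i j _.
Arguments exp_le {R n k D} hD0 hD1 G c _.
Arguments exp_ge0 {R n k D} hD0 G _.
Arguments accP_sum1 {R n k D} hD1.
Arguments accP_ge0 {R n k D} hD0 A.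
Lemma sum_some_b {n} (o : option 'I_n) (b : 'I_n -> bool) :
  (\sum_i ((o == Some i) && b i : nat) = if o is Some i0 then (b i0 : nat) else 0)%N.
Proof.
case: o => [i0|]; last by rewrite big1.
rewrite (bigD1 i0) //= eqxx /= big1 ?addn0 // => i ne.
have -> : (Some i0 == Some i) = false by apply/eqP => -[e]; rewrite e eqxx in ne.
by [].
Qed.

Lemma sum_some {n} (o : option 'I_n) : (\sum_i (o == Some i : nat) <= 1)%N.
Proof.
have := sum_some_b o (fun _ => true).
rewrite (eq_bigr (fun i => (o == Some i : nat))) => [->|i _]; last by rewrite andbT.
by case: o.
Qed.

Section OptBound.
Variables (R : realType) (n k T : nat).
Variable D : 'I_n -> {ffun 'I_k -> bool} -> R.
Hypothesis hD0 : forall i a, 0 <= D i a.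
Hypothesis hD1 : forall i, \sum_(a : {ffun 'I_k -> bool}) D i a = 1.
Variable v : 'I_n -> 'I_k -> R.
Variable pol : policy n k.
Hypothesis hpol : valid_policy T pol.

Lemma run_indep A i b t : ~~ offered (run pol A t [::]) i ->
   run pol (upd A i b) t [::] = run pol A t [::].
Proof.
elim: t => [|t IH] //; rewrite !runS offered_outcome negb_or => /andP[nof /existsPn nj].
rewrite IH //; congr rcons; apply/ffunP => j; rewrite !outcomeE.
case E: (pol _ j) => [i'|] //.
have ne : i' != i by apply/negP => /eqP ei; move: (nj j); rewrite E ei eqxx.
by rewrite upd_other.
Qed.

Definition Fb t A i j : bool := pol (run pol A t [::]) j == Some i.

Lemma Finv t (lt : (t < T)%N) i j A b : Fb t (upd A i b) i j = Fb t A i j.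
Proof.
have key : forall A' b', pol (run pol A' t [::]) j = Some i ->
    run pol (upd A' i b') t [::] = run pol A' t [::].
  move=> A' b' e; apply: run_indep.
  have [v1 _] := run_valid_at (hpol A') lt.
  by have [] := v1 _ _ e.
rewrite /Fb; apply/eqP/eqP => e.
  by have := key (upd A i b) (A i) e; rewrite updK => ->.
by rewrite key.
Qed.

Definition xsol i j := \sum_A accP D A * (\sum_(t < T) (Fb t A i j : nat))%:R.

Lemma xsolE i j : xsol i j = \sum_(t < T) \sum_A accP D A * (Fb t A i j : nat)%:R.
Proof.
rewrite /xsol (eq_bigr (fun A => \sum_(t < T) accP D A * (Fb t A i j : nat)%:R)).
  by rewrite exchange_big.
by move=> A _; rewrite natr_sum big_distrr.
Qed.

Lemma pxE i j : pacc D i j * xsol i j =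
  \sum_(t < T) \sum_A accP D A * ((Fb t A i j : nat)%:R * (A i j)%:R).
Proof.
rewrite xsolE big_distrr; apply: eq_bigr => -[t lt] _ /=.
by rewrite (indep hD1 (fun A => (Fb t A i j : nat)%:R)) // => A b; rewrite Finv.
Qed.

Lemma hist_run A t : hist_value v (run pol A t [::]) =
  \sum_(s < t) \sum_j \sum_i v i j * ((Fb s A i j : nat)%:R * (A i j)%:R).
Proof.
elim: t => [|t IH]; first by rewrite /hist_value big_nil big_ord0.
rewrite runS /hist_value big_rcons /= -/(hist_value v _) IH big_ord_recr /=.
congr (_ + _); apply: eq_bigr => j _; rewrite outcomeE /Fb.
case E: (pol _ j) => [i0|] /=; last by rewrite big1 // => i _; rewrite mul0r mulr0.
rewrite (bigD1 i0) //= eqxx big1 ?addr0 => [|i ne].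
  by case: (A i0 j); rewrite ?mulr1 ?mulr0 ?mul1r.
have -> : (Some i0 == Some i) = false by apply/eqP => -[e]; rewrite e eqxx in ne.
by rewrite mul0r mulr0.
Qed.

Lemma Rpol_eq : Rpol D v T pol = LP_obj D v xsol.
Proof.
rewrite /Rpol /LP_obj.
under eq_bigr => A _ do rewrite hist_run.
under [RHS]eq_bigr => j _ do under eq_bigr => i _ do rewrite -mulrA pxE.
under eq_bigr => A _ do rewrite big_distrr /=.
under eq_bigr => A _ do under eq_bigr => s _ do rewrite big_distrr /=.
under eq_bigr => A _ do under eq_bigr => s _ do under eq_bigr => j _ do
  rewrite big_distrr /=.
under [RHS]eq_bigr => j _ do under eq_bigr => i _ do rewrite big_distrr /=.
under [RHS]eq_bigr => j _ do under eq_bigr => i _ do under eq_bigr => s _ do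
  rewrite big_distrr /=.
rewrite exchange_big /=.
under eq_bigr => s _ do rewrite exchange_big /=.
under eq_bigr => s _ do under eq_bigr => j _ do rewrite exchange_big /=.
rewrite exchange_big /=.
under eq_bigr => j _ do rewrite exchange_big /=.
apply: eq_bigr => j _; apply: eq_bigr => i _; apply: eq_bigr => s _.
by apply: eq_bigr => A _; rewrite mulrCA.
Qed.

Lemma xsol_ge0 i j : 0 <= xsol i j.
Proof. by apply: exp_ge0 => // A; apply: ler0n. Qed.

Lemma feas1 j : \sum_i xsol i j <= T%:R.
Proof.
rewrite /xsol exchange_big /=.
under eq_bigr => A _ do rewrite -big_distrr /= -natr_sum.
apply: exp_le => // A; rewrite ler_nat exchange_big /=.
apply: (@leq_trans (\sum_(t < T) 1)%N); first by apply: leq_sum => t _; apply: sum_some.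
by rewrite sum1_card card_ord.
Qed.

Lemma accept_upto A j t : (t <= T)%N ->
  (\sum_(s < t) \sum_i (Fb s A i j && A i j : nat) <= filled (run pol A t [::]) j)%N.
Proof.
elim: t => [|t IH] lt; first by rewrite big_ord0.
rewrite big_ord_recr runS /= filled_rcons outcomeE /Fb sum_some_b.
have IH' := IH (ltnW lt).
case E: (pol _ j) => [i0|]; last by rewrite addn0 orbF.
case Ai: (A i0 j) => /=; last by rewrite addn0 orbF.
have [v1 _] := run_valid_at (hpol A) lt.
have [nf _] := v1 _ _ E.
by move: IH'; rewrite (negbTE nf) orbT leqn0 => /eqP->.
Qed.

Lemma feas2 j : \sum_i pacc D i j * xsol i j <= 1.
Proof.
under eq_bigr => i _ do rewrite pxE.
under eq_bigr => i _ do rewrite exchange_big /=.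
rewrite exchange_big /=.
under eq_bigr => A _ do under eq_bigr => i _ do rewrite -big_distrr /=.
under eq_bigr => A _ do rewrite -big_distrr /=.
apply: exp_le => // A.
rewrite (eq_bigr (fun i => (\sum_(t < T) (Fb t A i j && A i j : nat))%:R)); last first.
  by move=> i _; rewrite natr_sum; apply: eq_bigr => t _; rewrite -natrM mulnb.
rewrite -natr_sum -[X in _ <= X]/(1%:R) ler_nat exchange_big /=.
by apply: (leq_trans (accept_upto A j T (leqnn T))); case: filled.
Qed.

Lemma round_once h (o : offers n k) i : valid_offers h o ->
  (\sum_j (o j == Some i : nat) <= 1)%N /\
  ((0 < \sum_j (o j == Some i : nat))%N -> ~~ offered h i).
Proof.
move=> [vo vu].
case: (pickP (fun j => o j == Some i)) => [j0 e|none]; last first.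
  by rewrite big1 // => j _; rewrite none.
split; last by have [] := vo _ _ (eqP e).
rewrite (bigD1 j0) //= e big1 // => j ne.
case: eqP => // ej.
by move: ne; rewrite (vu _ _ _ (eqP e) ej) eqxx.
Qed.

Lemma offer_upto A i t : (t <= T)%N ->
  (\sum_(s < t) \sum_j (Fb s A i j : nat) <= offered (run pol A t [::]) i)%N.
Proof.
elim: t => [|t IH] lt; first by rewrite big_ord0.
rewrite big_ord_recr runS /= offered_outcome /Fb.
have IH' := IH (ltnW lt); rewrite /Fb in IH'.
have [b1 b2] := round_once _ _ i (run_valid_at (hpol A) lt).
case: (boolP [exists j, pol (run pol A t [::]) j == Some i]) => [ex|nex].
  rewrite orbT.
  have pos : (0 < \sum_j (pol (run pol A t [::]) j == Some i : nat))%N.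
    case/existsP: ex => j0 e; rewrite (bigD1 j0) //= e.
    by rewrite add1n.
  move: IH'; rewrite (negbTE (b2 pos)) leqn0 => /eqP ->; rewrite add0n; exact: b1.
have -> : (\sum_j (pol (run pol A t [::]) j == Some i : nat)) = 0%N.
  by rewrite big1 // => j _; move/existsPn: nex => /(_ j) /negbTE ->.
by rewrite addn0 orbF.
Qed.

Lemma feas3 i : \sum_j xsol i j <= 1.
Proof.
rewrite /xsol exchange_big /=.
under eq_bigr => A _ do rewrite -big_distrr /= -natr_sum.
apply: exp_le => // A; rewrite -[X in _ <= X]/(1%:R) ler_nat exchange_big /=.
by apply: (leq_trans (offer_upto A i T (leqnn T))); case: offered.
Qed.

Lemma xsol_feasible : LP_feasible D T xsol.
Proof.
split; first exact: feas1.
split; first exact: feas2.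
split; first exact: feas3.
move=> i j; rewrite xsol_ge0 /=.
apply: le_trans (feas3 i); rewrite (bigD1 j) //= lerDl.
by apply: sumr_ge0 => j' _; apply: xsol_ge0.
Qed.

Lemma Rpol_le_LP y : LP_optimal D v T y -> Rpol D v T pol <= LP_obj D v y.
Proof. by move=> [_ opt]; rewrite Rpol_eq; apply: opt; apply: xsol_feasible. Qed.

End OptBound.
Lemma exists_best (R : realType) n (P : pred 'I_n) (f : 'I_n -> R) i0 : P i0 ->
  exists i, P i && [forall i', P i' ==> ((f i' < f i) || ((f i' == f i) && (i <= i')%N))].
Proof.
move=> Pi0.
case: (arg_maxP f Pi0) => i1 Pi1 max1.
have Q1 : (fun i => P i && (f i == f i1)) i1 by rewrite /= Pi1 eqxx.
case: (@arg_minnP _ i1 (fun i => P i && (f i == f i1)) (fun i : 'I_n => nat_of_ord i) Q1) => i2 /andP[Pi2 /eqP e2] min2.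
exists i2; rewrite Pi2 /=; apply/forallP => i'; apply/implyP => Pi'.
have le1 : f i' <= f i1 by exact: max1.
rewrite e2; move: le1; rewrite le_eqVlt => /orP[/eqP e|->]; last by [].
rewrite e eqxx /= (min2 i') ?orbT //= Pi' e eqxx //.
Qed.

Section AlgSim.
Variables (R : realType) (n k T : nat).
Variable v : 'I_n -> 'I_k -> R.
Hypothesis hv : forall i j, 0 <= v i j.
Variables (Y A : mat n k).
Hypothesis hrow : forall i j j', Y i j -> Y i j' -> j = j'.
Hypothesis hcol : forall j, (#|[pred i | Y i j]| <= T)%N.

Definition Vj (h : history n k) j : R :=
  \sum_(r <- h) (if r j is Some (i, true) then v i j else 0).

Lemma Vj_ge0 h j : 0 <= Vj h j.
Proof. by apply: sumr_ge0 => r _; case: (r j) => [[i [|]]|]. Qed.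

Lemma Vj_rcons h r j :
  Vj (rcons h r) j = Vj h j + (if r j is Some (i, true) then v i j else 0).
Proof. by rewrite /Vj big_rcons. Qed.

Lemma alg_spec h j i : alg_policy v Y h j = Some i ->
  [/\ ~~ filled h j, Y i j, ~~ offered h i &
      forall i', Y i' j -> ~~ offered h i' -> v i' j <= v i j].
Proof.
rewrite /alg_policy ffunE; case: filled => //=.
case: pickP => // i0 /and3P[yi noi /forallP mx] [<-].
split=> // i' yi' noi'; have := mx i'; rewrite yi' noi' /=.
by move=> /orP[/ltW // | /andP[/eqP -> _]].
Qed.

Lemma alg_none h j : ~~ filled h j -> alg_policy v Y h j = None ->
  forall i, Y i j -> offered h i.
Proof.
move=> nf; rewrite /alg_policy ffunE (negbTE nf) /=.
case: pickP => // none _ i yi; apply/negPn/negP => noi.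
have [i2 /andP[/andP[yi2 noi2] best]] :=
  @exists_best R n (fun i => Y i j && ~~ offered h i) (fun i => v i j) i (introT andP (conj yi noi)).
have := none i2; rewrite yi2 noi2 /= => /negbT /negP; apply.
apply/forallP => i'; apply/implyP => H.
by move/forallP: best => /(_ i') /implyP /(_ H).
Qed.

Lemma offY h j i : Y i j ->
  offered (rcons h (outcome A (alg_policy v Y h))) i = offered h i || (alg_policy v Y h j == Some i).
Proof.
move=> yi; rewrite offered_outcome; congr (_ || _).
apply/existsP/idP => [[j' /eqP e]|e]; last by exists j.
have [_ yi' _ _] := alg_spec _ _ _ e.
by rewrite (hrow _ _ _ yi yi') e.
Qed.

Definition Inv j (h : history n k) : Prop :=
  (filled h j -> forall i, Y i j -> A i j -> v i j <= Vj h j) /\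
  (~~ filled h j -> [/\ Vj h j = 0, (forall i, Y i j -> offered h i -> ~~ A i j) &
     ((size h <= #|[pred i | Y i j && offered h i]|)%N \/ forall i, Y i j -> offered h i)]).

Lemma Inv_step j h : Inv j h -> Inv j (rcons h (outcome A (alg_policy v Y h))).
Proof.
move=> [Hf Hnf].
set o := alg_policy v Y h.
have oY : forall i, Y i j -> offered (rcons h (outcome A o)) i = offered h i || (o j == Some i).
  by move=> i yi; apply: offY.
rewrite /Inv filled_rcons Vj_rcons outcomeE.
case F: (filled h j) => /=.
  have -> : o j = None by rewrite /o /alg_policy ffunE F.
  by split=> // _ i yi ai; rewrite addr0; apply: Hf.
have [V0 nacc cnt] := Hnf (negbT F).
case E: (o j) => [i0|].
  have [_ y0 no0 mx] := alg_spec _ _ _ E.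
  case Ai: (A i0 j) => /=.
    split=> // _ i yi ai; rewrite V0 add0r.
    case: (boolP (offered h i)) => oi; first by move: (nacc i yi oi); rewrite ai.
    exact: mx.
  split=> // _; split; first by rewrite V0 addr0.
    move=> i yi; rewrite oY // E => /orP[oi|/eqP[<-]]; first exact: nacc.
    by rewrite Ai.
  case: cnt => [c|all]; last first.
    by right=> i yi; rewrite oY // all.
  left; rewrite size_rcons.
  have -> : #|[pred i | Y i j && offered (rcons h (outcome A o)) i]| =
            #|[predU1 i0 & [pred i | Y i j && offered h i]]|.
    apply: eq_card => i; rewrite !inE.
    case: (boolP (Y i j)) => yi /=; last first.
      by case: eqP => // ei; rewrite ei y0 in yi.
    rewrite oY // E.
    have -> : (Some i0 == Some i) = (i == i0) by apply/eqP/eqP => [[->]|->].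
    by rewrite orbC.
  by rewrite cardU1 inE /= (negbTE no0) andbF.
have all := alg_none _ _ (negbT F) E.
split=> // _; split; first by rewrite V0 addr0.
  by move=> i yi; rewrite oY // E orbF; apply: nacc.
by right=> i yi; rewrite oY // all.
Qed.

Lemma alg_value_j j :
  \big[Num.max/0]_(i | Y i j && A i j) v i j <= Vj (run (alg_policy v Y) A T [::]) j.
Proof.
have inv : Inv j (run (alg_policy v Y) A T [::]).
  apply: run_ind; last exact: Inv_step.
  split=> //= _; split=> //; first by rewrite /Vj big_nil.
  by left.
have sz : size (run (alg_policy v Y) A T [::]) = T by rewrite run_size.
set h := run _ _ _ _ in inv sz *.
have [Hf Hnf] := inv.
case F: (filled h j).
  apply: bigmax_le; first exact: Vj_ge0.
  by move=> i /andP[yi ai]; apply: Hf.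
have [V0 nacc cnt] := Hnf (negbT F).
have all : forall i, Y i j -> offered h i.
  case: cnt => [c|//] i yi; apply/negPn/negP => nof.
  have e := cardID [pred i | offered h i] [pred i | Y i j].
  have pos : (0 < #|[predD [pred i | Y i j] & [pred i | offered h i]]|)%N.
    by apply/card_gt0P; exists i; rewrite !inE /= yi nof.
  have e2 : #|[predI [pred i | Y i j] & [pred i | offered h i]]| =
            #|[pred i | Y i j && offered h i]| by apply: eq_card => x; rewrite !inE.
  have arith : forall a b c d t : nat, (a + b = c)%N -> (a = d) -> (t <= d)%N ->
     (c <= t)%N -> (0 < b)%N -> False by move=> *; lia.
  rewrite sz in c; exact: (arith _ _ _ _ _ e e2 c (hcol j) pos).
rewrite V0; apply: bigmax_le => // i /andP[yi ai].
by move: (nacc i yi (all i yi)); rewrite ai.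
Qed.

Lemma alg_value :
  \sum_j \big[Num.max/0]_(i | Y i j && A i j) v i j <=
  hist_value v (run (alg_policy v Y) A T [::]).
Proof.
rewrite /hist_value exchange_big /=.
by apply: ler_sum => j _; apply: alg_value_j.
Qed.

End AlgSim.
Lemma bigmax_ge0 (R : realType) (I : finType) (P : pred I) (f : I -> R) :
  0 <= \big[Num.max/0]_(i | P i) f i.
Proof. by elim/big_rec: _ => // i x _ hx; rewrite le_max hx orbT. Qed.

Lemma phi_max (R : realType) (m a b : R) :
  Num.max (Num.max a b - m) 0 = Num.max (Num.max (a - m) 0) (Num.max (b - m) 0).
Proof.
rewrite !maxEle.
case: (leP a b) => ab; case: (leP (b - m) 0) => h1; case: (leP (a - m) 0) => h2 //=;
  rewrite ?lexx //; try lra.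
all: try (case: ifP => //; lra).
Qed.

Lemma threshold (R : realType) n (Om : finType) (mu : Om -> R)
  (X : Om -> 'I_n -> bool) (q : 'I_n -> R) (c : R) :
  (forall w, 0 <= mu w) ->
  (forall S : {set 'I_n}, c * \sum_(i in S) q i <= \sum_w mu w * ([exists i in S, X w i])%:R) ->
  forall f : 'I_n -> R, (forall i, 0 <= f i) ->
  c * \sum_i f i * q i <= \sum_w mu w * \big[Num.max/0]_(i | X w i) f i.
Proof.
move=> mu0 hS f.
have [N] := ubnP #|[set i | 0 < f i]|; elim: N f => // N IH f lt f0.
case: (boolP [exists i, 0 < f i]) => [/existsP [i0 fi0]|none].
  set S := [set i | 0 < f i].
  have Si0 : i0 \in S by rewrite inE.
  case: (arg_minP f Si0) => im Sim minf.
  have {}Sim : im \in S by [].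
  have {}minf : forall j, j \in S -> f im <= f j by [].
  set m := f im.
  have m0 : 0 < m by move: Sim; rewrite inE.
  pose f' i := Num.max (f i - m) 0.
  have f'0 : forall i, 0 <= f' i by move=> i; rewrite /f' le_max lexx orbT.
  have fE : forall i, f i = m * (i \in S)%:R + f' i.
    move=> i; rewrite /f'; case: (boolP (i \in S)) => iS /=.
      by rewrite mulr1 max_l ?subr_ge0 ?minf // addrC subrK.
    have fi : f i = 0 by move: iS; rewrite inE -leNgt => le; apply/le_anti; rewrite le f0.
    rewrite mulr0 add0r fi max_r // sub0r oppr_le0 ltW //.
  have IH' := IH f' _ f'0.
  have lt' : (#|[set i | (0 < f' i)%R]| < N)%N.
    apply: (@leq_trans #|S|); last by rewrite -ltnS.
    apply: proper_card; apply/properP; split.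
      apply/fintype.subsetP => i; rewrite !inE /f' lt_max ltxx orbF subr_gt0.
      by apply: lt_trans.
    exists im; first by [].
    by rewrite inE /f' /m subrr maxxx ltxx.
  have {}IH' := IH' lt'.
  have ME : forall w, \big[Num.max/0]_(i | X w i) f i =
      m * ([exists i in S, X w i])%:R + \big[Num.max/0]_(i | X w i) f' i.
    move=> w.
    have H0 : Num.max (0 - m) 0 = 0 by rewrite sub0r max_r // oppr_le0 ltW.
    have BM : \big[Num.max/0]_(i | X w i) f' i = Num.max (\big[Num.max/0]_(i | X w i) f i - m) 0.
      by rewrite (big_morph (fun x => Num.max (x - m) 0) (phi_max _ m) H0).
    rewrite BM.
    case: (boolP [exists i in S, X w i]) => [/existsP [i /andP[iS Xi]]|nS] /=.
      rewrite mulr1 max_l; first by rewrite addrC subrK.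
      rewrite subr_ge0; apply: le_trans (minf _ iS) _.
      exact: le_bigmax_cond.
    have M0 : \big[Num.max/0]_(i | X w i) f i = 0.
      apply/le_anti; rewrite bigmax_ge0 andbT; apply: bigmax_le => // i Xi.
      have iS : i \notin S by apply: contra nS => iS; apply/existsP; exists i; rewrite iS.
      by move: iS; rewrite inE -leNgt.
    by rewrite M0 mulr0 add0r sub0r max_r // oppr_le0 ltW.
  under [X in _ <= X]eq_bigr => w _ do rewrite ME mulrDr.
  rewrite big_split /=.
  under eq_bigr => i _ do rewrite fE mulrDl.
  rewrite big_split /= mulrDr; apply: lerD; last exact: IH'.
  rewrite (eq_bigr (fun i => m * ((i \in S)%:R * q i))); last by move=> i _; rewrite mulrA.
  rewrite -mulr_sumr mulrCA.
  have -> : \sum_i (i \in S)%:R * q i = \sum_(i in S) q i.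
    by rewrite [RHS]big_mkcond; apply: eq_bigr => i _; case: (i \in S); rewrite ?mul1r ?mul0r.
  under [X in _ <= X]eq_bigr => w _ do rewrite mulrCA.
  rewrite -mulr_sumr; apply: ler_wpM2l; first exact: ltW.
  exact: hS.
have fz : forall i, f i = 0.
  by move=> i; apply/le_anti; rewrite f0 andbT leNgt; apply: contra none => h; apply/existsP; exists i.
rewrite big1 ?mulr0; last by move=> i _; rewrite fz mul0r.
by apply: sumr_ge0 => w _; apply: mulr_ge0 => //; apply: bigmax_ge0.
Qed.
Lemma expb (R : realType) (s : R) : 0 <= s -> s <= 1 ->
  (1 - expR (-1)) * s <= 1 - expR (- s).
Proof.
move=> s0 s1.
have := convex_expR (Itv01 s0 s1) (-1) 0.
rewrite !convRE /= expR0 mulr0 addr0 mulrN1 mulr1.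
rewrite /unstable.onem => h.
have e : (1 - expR (-1)) * s = 1 - (s * expR (-1) + (1 - s)) by ring.
rewrite e lerD2l lerN2 //.
Qed.
Section ProbPart.
Variables (R : realType) (n k : nat).
Variable D : 'I_n -> {ffun 'I_k -> bool} -> R.
Hypothesis hD0 : forall i a, 0 <= D i a.
Hypothesis hD1 : forall i, \sum_(a : {ffun 'I_k -> bool}) D i a = 1.
Variable y : 'I_n -> 'I_k -> R.
Variable PY : mat n k -> R.
Hypothesis hPY0 : forall Y, 0 <= PY Y.
Hypothesis hPY1 : \sum_Y PY Y = 1.
Hypothesis hP1 : forall i j, prob PY (fun Y => Y i j) = y i j.
Hypothesis hP3 : forall j (S : {set 'I_n}) (b : bool),
     prob PY (fun Y => [forall i in S, Y i j == b])
       <= \prod_(i in S) prob PY (fun Y => Y i j == b).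

Lemma probE (E : pred (mat n k)) : prob PY E = \sum_Y PY Y * (E Y)%:R.
Proof.
rewrite /prob big_mkcond; apply: eq_bigr => Y _.
by case: (E Y); rewrite ?mulr1 ?mulr0.
Qed.

Lemma prob_false i j : prob PY (fun Y => Y i j == false) = 1 - y i j.
Proof.
rewrite -hP1 -hPY1 /prob [\sum_Y PY Y](bigID (fun Y : mat n k => Y i j)) /= addrC addrK.
by apply: eq_bigl => Y; case: (Y i j).
Qed.

Lemma negcorr j (s : seq 'I_n) (U : {set 'I_n}) (p : 'I_n -> R) :
  uniq s -> (forall i, i \in s -> i \notin U) -> (forall i, 0 <= p i <= 1) ->
  \sum_Y PY Y * (([forall i in U, Y i j == false] : nat)%:R *
                 \prod_(i <- s) (1 - (Y i j : nat)%:R * p i))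
   <= \prod_(i in U) (1 - y i j) * \prod_(i <- s) (1 - y i j * p i).
Proof.
move=> + + p01; elim: s U => [|i s IH] U us dis.
  rewrite !big_nil !mulr1.
  rewrite (eq_bigr (fun Y => PY Y * ([forall i in U, Y i j == false] : nat)%:R)); last first.
    by move=> Y _; rewrite big_nil mulr1.
  rewrite -probE; apply: le_trans (hP3 j U false) _.
  by under eq_bigr do rewrite prob_false.
move: us => /= /andP[nis us].
have niU : i \notin U by apply: dis; rewrite inE eqxx.
have dis' : forall i', i' \in s -> i' \notin U.
  by move=> i' h; apply: dis; rewrite inE h orbT.
have dis'' : forall i', i' \in s -> i' \notin i |: U.
  move=> i' h; rewrite in_setU1 negb_or (dis' _ h) andbT.
  by apply: contraNneq nis => <-.
have [p0 p1] := andP (p01 i).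
have E : forall Y : mat n k,
  PY Y * (([forall i' in U, Y i' j == false] : nat)%:R *
          \prod_(i0 <- i :: s) (1 - (Y i0 j : nat)%:R * p i0)) =
  (1 - p i) * (PY Y * (([forall i' in U, Y i' j == false] : nat)%:R *
          \prod_(i0 <- s) (1 - (Y i0 j : nat)%:R * p i0))) +
  p i * (PY Y * (([forall i' in i |: U, Y i' j == false] : nat)%:R *
          \prod_(i0 <- s) (1 - (Y i0 j : nat)%:R * p i0))).
  move=> Y.
  have -> : [forall i' in i |: U, Y i' j == false] =
            (~~ Y i j) && [forall i' in U, Y i' j == false].
    apply/forallP/andP => [H|[h1 /forallP h2] i'].
      split; first by move: (H i); rewrite in_setU1 eqxx /= => /eqP ->.
      apply/forallP => i'; apply/implyP => iU.
      by move: (H i'); rewrite in_setU1 iU orbT.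
    rewrite in_setU1; case: eqP => [->|_] /=; first by case: (Y i j) h1.
    exact: h2.
  rewrite big_cons.
  case: (Y i j); case: [forall i' in U, Y i' j == false] => /=; ring.
rewrite (eq_bigr _ (fun Y _ => E Y)) big_split /= -!mulr_sumr.
apply: le_trans (lerD (ler_wpM2l _ (IH U us dis')) (ler_wpM2l _ (IH (i |: U) us dis''))) _.
- by rewrite subr_ge0.
- by [].
rewrite big_setU1 //= big_cons.
by rewrite le_eqVlt; apply/orP; left; apply/eqP; ring.
Qed.

Lemma accP_prod (G : 'I_n -> {ffun 'I_k -> bool} -> R) :
  \sum_A accP D A * \prod_i G i (A i) = \prod_i \sum_a D i a * G i a.
Proof.
by rewrite [RHS]bigA_distr_bigA /=; apply: eq_bigr => A _; rewrite /accP -big_split.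
Qed.

Lemma EA_prod j (Y : mat n k) (S : {set 'I_n}) :
  \sum_A accP D A * \prod_(i in S) (1 - ((Y i j && A i j) : nat)%:R) =
  \prod_(i in S) (1 - (Y i j : nat)%:R * pacc D i j).
Proof.
rewrite (eq_bigr (fun A => accP D A * \prod_i (fun i a => if i \in S then
   1 - ((Y i j && a j) : nat)%:R else 1) i (A i))); last by move=> A _; rewrite big_mkcond.
rewrite (accP_prod (fun i a => if i \in S then
   1 - ((Y i j && a j) : nat)%:R else 1)) [RHS]big_mkcond /=; apply: eq_bigr => i _.
case: (i \in S); last by rewrite -big_distrl /= hD1 mul1r.
under eq_bigr => a _ do rewrite mulrBr mulr1.
rewrite sumrB hD1 -pacc_sum mulr_sumr; congr (_ - _); apply: eq_bigr => a _.
by case: (Y i j); case: (a j) => /=; rewrite ?mulr1 ?mulr0 ?mul0r ?mul1r.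
Qed.

Lemma ind_exists (S : {set 'I_n}) (b : 'I_n -> bool) :
  ([exists i in S, b i] : nat)%:R = 1 - \prod_(i in S) (1 - (b i : nat)%:R) :> R.
Proof.
case: (boolP [exists i in S, b i]) => [/existsP [i0 /andP [iS bi]]|none] /=.
  by rewrite (bigD1 i0) //= bi subrr mul0r subr0.
rewrite big1 ?subrr // => i iS.
have : ~~ b i by apply: contra none => bi; apply/existsP; exists i; rewrite iS.
by move/negbTE ->; rewrite subr0.
Qed.

Lemma hyp_S j (S : {set 'I_n}) :
  (forall i, 0 <= y i j <= 1) ->
  \sum_i pacc D i j * y i j <= 1 ->
  (1 - expR (-1)) * \sum_(i in S) pacc D i j * y i j <=
  \sum_(w : mat n k * mat n k) (PY w.1 * accP D w.2) *
      ([exists i in S, w.1 i j && w.2 i j] : nat)%:R.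
Proof.
move=> y01 hsum.
have p01 : forall i, 0 <= pacc D i j <= 1.
  move=> i; rewrite /pacc sumr_ge0 //=; rewrite -(hD1 i) [X in _ <= X](bigID (fun a : {ffun 'I_k -> bool} => a j)) /=.
  by rewrite lerDl sumr_ge0.
have q0 : forall i, 0 <= pacc D i j * y i j.
  by move=> i; apply: mulr_ge0; [case/andP: (p01 i)|case/andP: (y01 i)].
set s := \sum_(i in S) pacc D i j * y i j.
have s0 : 0 <= s by apply: sumr_ge0.
have s1 : s <= 1.
  apply: le_trans _ hsum; rewrite /s [X in _ <= X](bigID (fun i => i \in S)) /= lerDl.
  exact: sumr_ge0.
apply: le_trans (@expb R s s0 s1) _.
under eq_bigr => w _ do rewrite ind_exists mulrBr mulr1.
rewrite sumrB lerB //.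
  rewrite -(pair_bigA _ (fun Y A => PY Y * accP D A)) /=.
  under eq_bigr => Y _ do rewrite -mulr_sumr (accP_sum1 hD1) mulr1.
  by rewrite hPY1.
rewrite -(pair_bigA _ (fun Y A => PY Y * accP D A * \prod_(i in S) (1 - ((Y i j && A i j) : nat)%:R))) /=.
under eq_bigr => Y _ do under eq_bigr => A _ do rewrite -mulrA.
under eq_bigr => Y _ do rewrite -mulr_sumr EA_prod.
have dis : forall i, i \in enum S -> i \notin (@finset.set0 _ : {set 'I_n}) by move=> i _; rewrite inE.
have hz : forall Y : mat n k,
    (([forall i in (@finset.set0 _ : {set 'I_n}), Y i j == false]) : nat)%:R = 1 :> R.
  move=> Y; rewrite (_ : [forall i in _, _] = true) //.
  by apply/forallP => i; rewrite inE.
have h : \sum_Y PY Y * \prod_(i in S) (1 - (Y i j : nat)%:R * pacc D i j) <=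
         \prod_(i in S) (1 - y i j * pacc D i j).
  have h := negcorr j (enum S) (@finset.set0 _) (fun i => pacc D i j) (enum_uniq S) dis p01.
  rewrite big_set0 mul1r big_enum in h.
  apply: le_trans h; rewrite le_eqVlt; apply/orP; left; apply/eqP.
  by apply: eq_bigr => Y _; rewrite hz mul1r big_enum.
apply: le_trans h _.
rewrite /s -sumrN expR_sum; apply: ler_prod => i iS.
rewrite mulrC subr_ge0; have [p0 p1] := andP (p01 i); have [y0 y1] := andP (y01 i).
rewrite (mulr_ile1 p0 y0 p1 y1) /=.
exact: expR_ge1Dx.
Qed.

End ProbPart.
Lemma p2_bound (R : realType) (s N : nat) (l : R) : l <= N%:R ->
  ((s%:R : R) = (Num.floor l)%:~R \/ (s%:R : R) = (Num.ceil l)%:~R) -> (s <= N)%N.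
Proof.
move=> lN [e|e]; rewrite -(ler_nat R) e.
  exact: le_trans (floor_le l) lN.
have h : (Num.ceil l)%:~R <= (N%:Z)%:~R :> R.
  by rewrite ler_int ceil_le_int -pmulrn.
by rewrite -pmulrn in h.
Qed.

Lemma sum_card n (b : 'I_n -> bool) : (\sum_i (b i : nat))%N = #|[pred i | b i]|.
Proof.
rewrite -sum1_card [RHS]big_mkcond /=; apply: eq_bigr => i _.
by rewrite inE; case: (b i).
Qed.

Theorem theorem5p1 (R : realType) (n k T : nat)
  (D : 'I_n -> {ffun 'I_k -> bool} -> R) (v : 'I_n -> 'I_k -> R)
  (hk : (1 <= k)%N) (hkT : (k <= T)%N) (hTn : (T <= n)%N)
  (hD0 : forall i a, 0 <= D i a) (hD1 : forall i, \sum_(a : {ffun 'I_k -> bool}) D i a = 1)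
  (hv : forall i j, 0 <= v i j)
  (y : 'I_n -> 'I_k -> R) (hy : LP_optimal D v T y)
  (PY : mat n k -> R) (hPY : GKPS_rounding y PY) :
  (1 - expR (-1)) * LPpar D v T <= R_ALG D v T PY /\
  (1 - expR (-1)) * OPTpar D v T <= (1 - expR (-1)) * LPpar D v T.
Proof.
have [hfeas hopt] := hy.
have [hF1 [hF2 [hF3 hF4]]] := hfeas.
have [hPY0 [hPY1 [hP1 [hP2r [hP2c [hP3r hP3c]]]]]] := hPY.
have c0 : 0 <= 1 - expR (-1) :> R by rewrite subr_ge0 expR_le1 oppr_le0 ler01.
have LPE : LPpar D v T = LP_obj D v y.
  rewrite /LPpar; apply/le_anti/andP; split.
    apply: ge_sup; first by exists (LP_obj D v y), y.
    by move=> x [y' [f ->]]; apply: hopt.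
  apply: ub_le_sup; last by exists y.
  by exists (LP_obj D v y) => x [y' [f ->]]; apply: hopt.
have pacc0 : forall i j, 0 <= pacc D i j by move=> i j; apply: sumr_ge0.
have LP0 : 0 <= LP_obj D v y.
  apply: sumr_ge0 => j _; apply: sumr_ge0 => i _.
  by apply: mulr_ge0; [apply: mulr_ge0|case/andP: (hF4 i j)].
rewrite LPE; split; last first.
  apply: (ler_wpM2l c0).
  rewrite /OPTpar.
  set E := (X in sup X).
  have ub : ubound E (LP_obj D v y).
    move=> x [m [w [pols [[hw hs] ->]]]]; rewrite /Rrpol.
    apply: (@le_trans _ _ (\sum_l w l * LP_obj D v y)).
      apply: ler_sum => l _; apply: ler_wpM2l; first exact: (hw l).1.
      exact: (@Rpol_le_LP R n k T D hD0 hD1 v (pols l) (hw l).2 y hy).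
    by rewrite -big_distrl /= hs mul1r.
  case: (boolp.pselect (E !=set0)%classic) => [ne|e]; first exact: ge_sup ne ub.
  have -> : E = set0.
    by apply/boolp.funext => x; apply/boolp.propext; split => // Ex; apply: e; exists x.
  by rewrite sup0.
pose M (Y A : mat n k) j := \big[Num.max/0]_(i | Y i j && A i j) v i j.
have step1 : \sum_Y PY Y * \sum_A accP D A * \sum_j M Y A j <= R_ALG D v T PY.
  rewrite /R_ALG /Rpol; apply: ler_sum => Y _.
  have [z|nz] := eqVneq (PY Y) 0; first by rewrite z !mul0r.
  have pos : 0 < PY Y by rewrite lt_def nz hPY0.
  apply: (ler_wpM2l (hPY0 Y)); apply: ler_sum => A _.
  apply: (ler_wpM2l (accP_ge0 hD0 A)).
  apply: alg_value => //.
    move=> i j j' yj yj'; apply/eqP/negPn/negP => ne.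
    have H := hP2r i Y pos; simpl in H.
    have l1 : \sum_j y i j <= 1%:R by exact: hF3.
    have := @p2_bound R _ 1 _ l1 H.
    rewrite (bigD1 j) // (bigD1 j') /=; last by rewrite eq_sym.
    by rewrite yj yj' /= => h; lia.
  move=> j; rewrite -sum_card.
  have H := hP2c j Y pos; simpl in H.
  exact: (@p2_bound R _ T _ (hF1 j) H).
apply: le_trans step1.
have y01 : forall j i, 0 <= y i j <= 1 by move=> j i; exact: hF4.
have stepj : forall j, (1 - expR (-1)) * \sum_i v i j * (pacc D i j * y i j) <=
    \sum_(w : mat n k * mat n k) (PY w.1 * accP D w.2) * M w.1 w.2 j.
  move=> j; apply: (@threshold R n _ (fun w : mat n k * mat n k => PY w.1 * accP D w.2)
    (fun w i => w.1 i j && w.2 i j) (fun i => pacc D i j * y i j)).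
  - by move=> w; apply: mulr_ge0 => //; apply: accP_ge0.
  - by move=> S; apply: (@hyp_S R n k D hD0 hD1 y PY hPY1 hP1 hP3c j S (y01 j) (hF2 j)).
  - by move=> i; apply: hv.
rewrite /LP_obj mulr_sumr.
under eq_bigr => j _ do under eq_bigr => i _ do rewrite -mulrA.
apply: le_trans (ler_sum _ (fun j _ => stepj j)) _.
rewrite exchange_big /=.
rewrite le_eqVlt; apply/orP; left; apply/eqP.
rewrite -(pair_bigA _ (fun Y A => \sum_j PY Y * accP D A * M Y A j)) /=.
apply: eq_bigr => Y _; rewrite mulr_sumr; apply: eq_bigr => A _.
by rewrite mulrA mulr_sumr.
Qed.
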